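(* Let $T\subseteq P_{2n}$ be transitive and closed under reversal. Then: 1. $(i,j)\in T$ implies $S_{2n,i,j}\in B_{2n}(T)$. 2. If $i\in[2n]$ and $v\in\mathbb{F}^{2n}$ is supported on $\{j:(j,i)\in T\}$, then $S_{2n,v,i}\in B_{2n}(T)$. 3. The set $\{S_{2n,i,j}: j\in[n],\ j+1\le i\le 2n+1-j,\ (i,j)\in T\}$ generates $B_{2n}(T)$. 4. Every $B\in B_{2n}(T)$ satisfies $B=S_{2n,V_n(B)e_{n,1},1}\cdots S_{2n,V_n(B)e_{n,n},n}$, and each factor $S_{2n,V_n(B)e_{n,j},j}$ lies in $B_{2n}(T)$ and is a product of generators from part 3; this gives a canonical expression of each element of $B_{2n}(T)$ in terms of these generators.
   Context: $\mathbb{F}$ is the field with two elements, $e_{N,i}$ standard basis column vectors, $I_N$ the identity, $[N]=\{1,\dots,N\}$. $R_{2n}=\sum_{i=1}^{2n}e_{2n,i}e_{2n,2n+1-i}^{\top}$; $\mathrm{Sp}_{2n}=\{C:C^{\top}R_{2n}C=R_{2n}\}$. $P_{2n}=\{(i,j):i,j\in[2n],i>j\}$. $T\subseteq P_{2n}$ is transitive if $(i,j),(j,k)\in T\Rightarrow(i,k)\in T$, and closed under reversal if $(i,j)\in T\iff(2n+1-j,2n+1-i)\in T$. $B_{2n}(T)=\big(I_{2n}+\mathrm{span}_{\mathbb{F}}\{e_{2n,i}e_{2n,j}^{\top}:(i,j)\in T\}\big)\cap\mathrm{Sp}_{2n}$. For $i\ne j\in[2n]$: $S_{2n,i,j}=I_{2n}+e_{2n,i}e_{2n,j}^{\top}$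 if $i+j=2n+1$, else $S_{2n,i,j}=I_{2n}+e_{2n,i}e_{2n,j}^{\top}+e_{2n,2n+1-j}e_{2n,2n+1-i}^{\top}$. For $v\in\mathbb{F}^{2n}$ with $v_i=0$: $S_{2n,v,i}=I_{2n}+ve_{2n,i}^{\top}+R_{2n}e_{2n,i}v^{\top}R_{2n}+v_{2n+1-i}e_{2n,2n+1-i}e_{2n,i}^{\top}$. $V_n(B)=\sum_{j=1}^n\sum_{i=j+1}^{2n+1-j}e_{2n,i}e_{2n,i}^{\top}Be_{2n,j}e_{n,j}^{\top}$. *)

(* Defs.v *)
(* Matrices over F = 'F_2, dimension 2n written n + n,
   indices 0-based: paper index i in [2n] corresponds to ordinal i-1. *)
From mathcomp Require Import all_boot all_order all_algebra.
Set Implicit Arguments. Unset Strict Implicit. Unset Printing Implicit Defensive.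
Import GRing.Theory.
Local Open Scope ring_scope.

Notation F := 'F_2.

Definition evec (N : nat) (i : 'I_N) : 'cV[F]_N := delta_mx i 0.

Definition Rmx (n : nat) : 'M[F]_(n + n) :=
  \matrix_(i, j) (j == rev_ord i)%:R.

Definition Sp (n : nat) (C : 'M[F]_(n + n)) : Prop :=
  C^T *m Rmx n *m C = Rmx n.

(* T as a relation: T i j  <->  (i,j) \in T *)
Definition subP (n : nat) (T : rel 'I_(n + n)) : Prop :=
  forall i j, T i j -> (j < i)%N.
Definition transitiveT (n : nat) (T : rel 'I_(n + n)) : Prop :=
  forall i j k, T i j -> T j k -> T i k.
Definition rev_closed (n : nat) (T : rel 'I_(n + n)) : Prop :=
  forall i j, T i j <-> T (rev_ord j) (rev_ord i).

Definition inB (n : nat) (T : rel 'I_(n + n)) (M : 'M[F]_(n + n)) : Prop :=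
  (exists c : 'I_(n + n) -> 'I_(n + n) -> F,
      M = 1%:M + \sum_(i < n + n) \sum_(j < n + n | T i j)
                   c i j *: (evec i *m (evec j)^T))
  /\ Sp M.

Definition Sij (n : nat) (i j : 'I_(n + n)) : 'M[F]_(n + n) :=
  if j == rev_ord i then 1%:M + evec i *m (evec j)^T
  else 1%:M + evec i *m (evec j)^T
       + evec (rev_ord j) *m (evec (rev_ord i))^T.

Definition Svi (n : nat) (v : 'cV[F]_(n + n)) (i : 'I_(n + n)) : 'M[F]_(n + n) :=
  1%:M + v *m (evec i)^T + Rmx n *m evec i *m v^T *m Rmx n
  + v (rev_ord i) 0 *: (evec (rev_ord i) *m (evec i)^T).

Definition Vn (n : nat) (B : 'M[F]_(n + n)) : 'M[F]_(n + n, n) :=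
  \sum_(j < n) \sum_(i < n + n | (j < i)%N && (i < n + n - j)%N)
     (evec i *m (evec i)^T *m B *m evec (lshift n j) *m (evec j)^T).

(* generating set of part 3 (0-based: j < n, j+1 <= i <= 2n-1-j) *)
Definition gens (n : nat) (T : rel 'I_(n + n)) (M : 'M[F]_(n + n)) : Prop :=
  exists (i : 'I_(n + n)) (j : 'I_n),
    [/\ (j < i)%N, (i < n + n - j)%N, T i (lshift n j) & M = Sij i (lshift n j)].

Inductive generated (N : nat) (G : 'M[F]_N -> Prop) : 'M[F]_N -> Prop :=
| gen_one : generated G 1%:M
| gen_base M : G M -> generated G M
| gen_mul M1 M2 : generated G M1 -> generated G M2 -> generated G (M1 *m M2)
| gen_inv M : generated G M -> generated G (invmx M).

Definition prod_of (N : nat) (G : 'M[F]_N -> Prop) (M : 'M[F]_N) : Prop :=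
  exists s : seq 'M[F]_N, (forall g, g \in s -> G g) /\
                          M = \big[mulmx/1%:M]_(g <- s) g.

(* Main.v *)
Require Import Defs.
From mathcomp Require Import all_boot all_order all_algebra.
From mathcomp Require Import ring zify.
Set Implicit Arguments. Unset Strict Implicit.
Import GRing.Theory.
Local Open Scope ring_scope.

Lemma F2_cases (x : F) : x = 0 \/ x = 1.
Proof.
case: x => [[|[|//]]] /= H; [left|right]; exact/val_inj.
Qed.

Lemma F2_add_self (x : F) : x + x = 0.
Proof. by case: (F2_cases x) => ->; apply/val_inj. Qed.

Lemma mx_add_self m p (A : 'M[F]_(m,p)) : A + A = 0.
Proof. by apply/matrixP => a b; rewrite !mxE F2_add_self. Qed.

Lemma sum_delta m (k : 'I_m) (G : 'I_m -> F) :
  \sum_c ((c == k)%:R * G c) = G k.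
Proof.
rewrite (bigD1 k) //= eqxx mul1r big1 ?addr0 // => c /negbTE ->.
by rewrite mul0r.
Qed.

Arguments sum_delta {m} k G.

Lemma boolM (b1 b2 : bool) : ((b1 && b2)%:R : F) = b1%:R * b2%:R.
Proof. by case: b1; case: b2; rewrite ?mulr1 ?mulr0. Qed.

Lemma rev_neq n (i : 'I_(n+n)) : (rev_ord i == i) = false.
Proof.
apply/negbTE/eqP => /(congr1 val) /=. case: i => i /= Hi. lia.
Qed.

Lemma rev_neq' n (i : 'I_(n+n)) : (i == rev_ord i) = false.
Proof. by rewrite eq_sym rev_neq. Qed.

Lemma rev_eq n (a i : 'I_(n+n)) : (rev_ord a == i) = (rev_ord i == a).
Proof.
apply/eqP/eqP => <-; by rewrite rev_ordK.
Qed.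

Lemma rev_eqr n (a b : 'I_(n+n)) : (a == rev_ord b) = (b == rev_ord a).
Proof. apply/eqP/eqP => ->; by rewrite rev_ordK. Qed.

Lemma rev_eq2 N (a b : 'I_N) : (rev_ord a == rev_ord b) = (a == b).
Proof. exact: (inj_eq rev_ord_inj). Qed.

Lemma evecE N (i a : 'I_N) b : evec i a b = (a == i)%:R.
Proof. by rewrite /evec mxE; case: b => [[|]] //= ?; rewrite andbT. Qed.

Lemma addE m p (A B : 'M[F]_(m,p)) a b : (A + B) a b = A a b + B a b.
Proof. by rewrite mxE. Qed.
Lemma scaleE m p (x : F) (A : 'M[F]_(m,p)) a b : (x *: A) a b = x * A a b.
Proof. by rewrite mxE. Qed.
Lemma oneE N (a b : 'I_N) : (1%:M : 'M[F]_N) a b = (a == b)%:R.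
Proof. by rewrite mxE. Qed.

Lemma outer_entry N M (x : 'cV[F]_N) (y : 'cV[F]_M) a b : (x *m y^T) a b = x a 0 * y b 0.
Proof. by rewrite mxE big_ord1 mxE. Qed.

Lemma RmxE n a b : Rmx n a b = (b == rev_ord a)%:R.
Proof. by rewrite mxE. Qed.

Lemma mulRmx n p (A : 'M[F]_(n+n,p)) a b : (Rmx n *m A) a b = A (rev_ord a) b.
Proof.
rewrite mxE -[RHS](sum_delta _ (fun c => A c b)).
by apply: eq_bigr => c _; rewrite RmxE.
Qed.

Lemma mulmxR n p (A : 'M[F]_(p,n+n)) a b : (A *m Rmx n) a b = A a (rev_ord b).
Proof.
rewrite mxE -[RHS](sum_delta _ (fun c => A a c)).
apply: eq_bigr => c _; rewrite RmxE mulrC; congr (_ * _).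
by rewrite eq_sym rev_eq eq_sym.
Qed.

Lemma RmxT n : (Rmx n)^T = Rmx n.
Proof. by apply/matrixP => a b; rewrite !mxE rev_eqr. Qed.

Lemma RR n : Rmx n *m Rmx n = 1%:M.
Proof.
apply/matrixP => a b; rewrite mulRmx RmxE rev_ordK !mxE.
by rewrite eq_sym.
Qed.

Lemma RAR n (A : 'M[F]_(n+n)) a b :
  (Rmx n *m A *m Rmx n) a b = A (rev_ord a) (rev_ord b).
Proof. by rewrite mulmxR mulRmx. Qed.

Definition dot N (x y : 'cV[F]_N) : F := (x^T *m y) 0 0.

Arguments dot {N}.

Lemma dotE N (x y : 'cV[F]_N) : dot x y = \sum_c x c 0 * y c 0.
Proof. by rewrite /dot mxE; apply: eq_bigr => c _; rewrite mxE. Qed.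

Lemma outer_mul N (a b c d : 'cV[F]_N) :
  (a *m b^T) *m (c *m d^T) = dot b c *: (a *m d^T).
Proof.
by rewrite mulmxA -(mulmxA a) [b^T *m c]mx11_scalar mul_mx_scalar -scalemxAl.
Qed.

Lemma dot_evecl N (i : 'I_N) y : dot (evec i) y = y i 0.
Proof.
rewrite dotE -[RHS](sum_delta _ (fun c => y c 0)).
by apply: eq_bigr => c _; rewrite evecE.
Qed.

Lemma dot_evecr N (i : 'I_N) y : dot y (evec i) = y i 0.
Proof.
rewrite dotE -[RHS](sum_delta _ (fun c => y c 0)).
by apply: eq_bigr => c _; rewrite evecE mulrC.
Qed.

Lemma dot_alt n (v : 'cV[F]_(n+n)) : dot (Rmx n *m v) v = 0.
Proof.
rewrite dotE.
have -> : \sum_c (Rmx n *m v) c 0 * v c 0 = \sum_c v (rev_ord c) 0 * v c 0.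
  by apply: eq_bigr => c _; rewrite mulRmx.
rewrite big_split_ord /=.
have -> : \sum_(i < n) v (rev_ord (rshift n i)) 0 * v (rshift n i) 0
        = \sum_(i < n) v (rev_ord (lshift n i)) 0 * v (lshift n i) 0.
  rewrite (reindex_inj rev_ord_inj) /=; apply: eq_bigr => i _.
  have -> : rev_ord (rshift n (rev_ord i)) = lshift n i.
    apply/val_inj => /=. case: i => i /= Hi. lia.
  have -> : rshift n (rev_ord i) = rev_ord (lshift n i).
    apply/val_inj => /=. case: i => i /= Hi. lia.
  by rewrite mulrC.
exact: F2_add_self.
Qed.
Definition Em n (v : 'cV[F]_(n+n)) (i : 'I_(n+n)) : 'M[F]_(n+n) :=
  v *m (evec i)^T + evec (rev_ord i) *m (Rmx n *m v)^T
  + v (rev_ord i) 0 *: (evec (rev_ord i) *m (evec i)^T).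

Arguments Em {n}.

Lemma Revec n (i : 'I_(n+n)) : Rmx n *m evec i = evec (rev_ord i).
Proof. by apply/matrixP => a b; rewrite mulRmx !evecE rev_eq eq_sym. Qed.

Lemma SviE n (v : 'cV[F]_(n+n)) i : Svi v i = 1%:M + Em v i.
Proof.
rewrite /Svi /Em Revec trmx_mul RmxT -!addrA; congr (_ + (_ + _)).
by rewrite -!mulmxA.
Qed.

Lemma EmE n (v : 'cV[F]_(n+n)) i a b :
  Em v i a b = v a 0 * (b == i)%:R + (a == rev_ord i)%:R * v (rev_ord b) 0
             + v (rev_ord i) 0 * ((a == rev_ord i) && (b == i))%:R.
Proof.
rewrite /Em !addE scaleE !outer_entry !evecE mulRmx boolM mulrA.
by rewrite -![_ * v (rev_ord b) 0]mulrC.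
Qed.

Lemma SviEE n (v : 'cV[F]_(n+n)) i a b :
  Svi v i a b = (a == b)%:R + (v a 0 * (b == i)%:R + (a == rev_ord i)%:R * v (rev_ord b) 0
             + v (rev_ord i) 0 * ((a == rev_ord i) && (b == i))%:R).
Proof. by rewrite SviE mxE EmE mxE. Qed.

Lemma EmEm n (v u : 'cV[F]_(n+n)) i : v i 0 = 0 -> u i 0 = 0 ->
  Em v i *m Em u i = dot (Rmx n *m v) u *: (evec (rev_ord i) *m (evec i)^T).
Proof.
move=> hv hu.
rewrite /Em !mulmxDl !mulmxDr -!scalemxAl -!scalemxAr !outer_mul.
rewrite !dot_evecl !dot_evecr hu !evecE rev_neq' mulRmx rev_ordK hv.
by rewrite !scale0r !scaler0 !add0r !addr0.
Qed.

Lemma Svi_invol n (v : 'cV[F]_(n+n)) i : v i 0 = 0 -> Svi v i *m Svi v i = 1%:M.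
Proof.
move=> hv; rewrite SviE mulmxDl mul1mx mulmxDr mulmx1 EmEm // dot_alt scale0r.
by rewrite addr0 -addrA mx_add_self addr0.
Qed.

Lemma RSTR n (v : 'cV[F]_(n+n)) i : Rmx n *m (Svi v i)^T *m Rmx n = Svi v i.
Proof.
apply/matrixP => a b; rewrite RAR mxE !SviEE rev_eq2 rev_eq rev_ordK.
rewrite rev_eq2 (eq_sym b a) andbC (eq_sym (rev_ord i) a); ring.
Qed.

Lemma Sp_RSTR n (S : 'M[F]_(n+n)) : Rmx n *m S^T *m Rmx n = S -> S *m S = 1%:M -> Sp S.
Proof.
move=> H1 H2; rewrite /Sp.
have -> : S^T *m Rmx n = Rmx n *m S by rewrite -{2}H1 !mulmxA RR mul1mx.
by rewrite -mulmxA H2 mulmx1.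
Qed.

Lemma Sp_Svi n (v : 'cV[F]_(n+n)) i : v i 0 = 0 -> Sp (Svi v i).
Proof. move=> hv; apply: Sp_RSTR; [exact: RSTR | exact: Svi_invol]. Qed.

Lemma Sij_Svi n (i j : 'I_(n+n)) : i != j -> Sij i j = Svi (evec i) j.
Proof.
move=> hij; apply/matrixP => a b; rewrite SviEE !evecE /Sij.
case: ifP => hj; rewrite !addE oneE !outer_entry !evecE.
- move/eqP: hj => ->; rewrite rev_ordK eqxx [rev_ord b == i]rev_eq [rev_ord i == b]eq_sym.
  by rewrite boolM mul1r F2_add_self add0r.
- rewrite [rev_ord j == i]rev_eq [rev_ord i == j]eq_sym hj mul0r addr0.
  by rewrite [rev_ord b == i]rev_eq [rev_ord i == b]eq_sym addrA.
Qed.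

Definition supp n (T : rel 'I_(n+n)) (M : 'M[F]_(n+n)) : Prop :=
  forall a b, (M - 1%:M) a b != 0 -> T a b.

Arguments supp {n}.

Lemma subE m p (A B : 'M[F]_(m,p)) a b : (A - B) a b = A a b - B a b.
Proof. by rewrite !mxE. Qed.

Lemma oppE m p (A : 'M[F]_(m,p)) a b : (- A) a b = - A a b.
Proof. by rewrite !mxE. Qed.

Lemma entry_sum n (T : rel 'I_(n+n)) (c : 'I_(n+n) -> 'I_(n+n) -> F) a b :
  (\sum_(i < n + n) \sum_(j < n + n | T i j) c i j *: (evec i *m (evec j)^T)) a b
  = if T a b then c a b else 0.
Proof.
rewrite summxE.
under eq_bigr => i _ do rewrite summxE.
under eq_bigr => i _ do under eq_bigr => j _ do
  rewrite scaleE outer_entry !evecE (eq_sym a) (eq_sym b).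
have H : forall i, \sum_(j < n + n | T i j) c i j * ((i == a)%:R * (j == b)%:R)
   = (i == a)%:R * \sum_(j < n + n | T i j) ((j == b)%:R * c i j).
  move=> i; rewrite mulr_sumr; apply: eq_bigr => j _; ring.
under eq_bigr => i _ do rewrite H.
rewrite sum_delta big_mkcond /=.
rewrite -[RHS](sum_delta b (fun j => if T a j then c a j else 0)).
by apply: eq_bigr => j _; case: (T a j); rewrite ?mulr0.
Qed.

Lemma inB_iff n (T : rel 'I_(n+n)) M : inB T M <-> supp T M /\ Sp M.
Proof.
split.
- case=> [[c ->] HS]; split => // a b.
  rewrite [1%:M + _]addrC addrK entry_sum; by case: (T a b); rewrite ?eqxx.
- case=> Hs HS; split => //; exists (fun i j => (M - 1%:M) i j).
  apply/matrixP => a b; rewrite addE entry_sum oneE.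
  case: ifP => hT; first by rewrite subE oneE addrC subrK.
  have : (M - 1%:M) a b == 0 by apply: contraFT hT => /Hs ->.
  by rewrite subE oneE subr_eq0 => /eqP ->; rewrite addr0.
Qed.

Lemma nz3 (x y z : F) : x + y + z != 0 -> [\/ x != 0, y != 0 | z != 0].
Proof.
move=> H. case: (eqVneq x 0) => hx; last by constructor 1.
case: (eqVneq y 0) => hy; last by constructor 2.
case: (eqVneq z 0) => hz; last by constructor 3.
by move: H; rewrite hx hy hz !addr0 eqxx.
Qed.

Lemma supp_mul n (T : rel 'I_(n+n)) A B :
  transitiveT T -> supp T A -> supp T B -> supp T (A *m B).
Proof.
rewrite /supp /transitiveT => Htr HA HB a b.
have E1 : A *m B - 1%:M = (A - 1%:M) *m (B - 1%:M) + (A - 1%:M) + (B - 1%:M).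
  rewrite mulmxBl !mulmxBr mulmx1 mul1mx mulmx1.
  apply/matrixP => x y; rewrite !(addE, oppE); ring.
rewrite E1 2!addE => /nz3 [H|H|H]; [|exact: HA H|exact: HB H].
move: H.
case: (boolP [exists k, ((A - 1%:M) a k != 0) && ((B - 1%:M) k b != 0)]).
  by case/existsP => k /andP [h1 h2] _; exact: Htr (HA _ _ h1) (HB _ _ h2).
move=> H'; rewrite mxE big1 ?eqxx // => k _.
have := negP H' ; move=> H2.
case: (eqVneq ((A - 1%:M) a k) 0) => [->|h1]; first by rewrite mul0r.
case: (eqVneq ((B - 1%:M) k b) 0) => [->|h2]; first by rewrite mulr0.
by exfalso; apply: H2; apply/existsP; exists k; rewrite h1 h2.
Qed.

Lemma supp1 n (T : rel 'I_(n+n)) : supp T 1%:M.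
Proof. by move=> a b; rewrite subrr mxE eqxx. Qed.

Lemma Sp1 n : Sp (1%:M : 'M[F]_(n+n)).
Proof. by rewrite /Sp trmx1 mulmx1 mul1mx. Qed.

Lemma Sp_mul n (A B : 'M[F]_(n+n)) : Sp A -> Sp B -> Sp (A *m B).
Proof.
rewrite /Sp => HA HB.
by rewrite trmx_mul !mulmxA -(mulmxA B^T) -(mulmxA B^T) HA HB.
Qed.

Lemma Sp_linv n (A : 'M[F]_(n+n)) : Sp A -> Rmx n *m A^T *m Rmx n *m A = 1%:M.
Proof.
rewrite /Sp => HA.
have -> : Rmx n *m A^T *m Rmx n *m A = Rmx n *m (A^T *m Rmx n *m A) by rewrite !mulmxA.
by rewrite HA RR.
Qed.

Lemma Sp_inv n (A : 'M[F]_(n+n)) : Sp A -> invmx A = Rmx n *m A^T *m Rmx n.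
Proof.
move=> HA; have H := Sp_linv HA.
have [_ HU] := mulmx1_unit H.
by rewrite -[LHS]mul1mx -H -(mulmxA _ A) mulmxV // mulmx1.
Qed.

Lemma Sp_invSp n (A : 'M[F]_(n+n)) : Sp A -> Sp (Rmx n *m A^T *m Rmx n).
Proof.
move=> HA; have H := mulmx1C (Sp_linv HA).
rewrite /Sp !trmx_mul RmxT trmxK.
rewrite !mulmxA -(mulmxA (Rmx n *m A)) RR mulmx1.
have -> : Rmx n *m A *m Rmx n *m A^T *m Rmx n
  = Rmx n *m (A *m (Rmx n *m A^T *m Rmx n)) by rewrite !mulmxA.
by rewrite H mulmx1.
Qed.

Lemma supp_inv n (T : rel 'I_(n+n)) A : rev_closed T -> supp T A ->
  supp T (Rmx n *m A^T *m Rmx n).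
Proof.
rewrite /rev_closed /supp => Hrc HA a b.
rewrite subE RAR mxE oneE (eq_sym a b) -(rev_eq2 b a) -oneE -subE => /HA h.
exact/Hrc.
Qed.

Lemma part2 n (T : rel 'I_(n+n)) : subP T -> rev_closed T ->
  forall i (v : 'cV[F]_(n+n)), (forall j, v j 0 != 0 -> T j i) -> inB T (Svi v i).
Proof.
move=> Hsub Hrc i v Hv.
have hvi : v i 0 = 0.
  apply/eqP; apply: contraTT isT => /Hv /Hsub; by rewrite ltnn.
apply/inB_iff; split; last exact: Sp_Svi.
move=> a b; rewrite SviE [1%:M + _]addrC addrK EmE => /nz3 [].
- case: (eqVneq b i) => [->|h]; last by rewrite mulr0 eqxx.
  by rewrite mulr1 => /Hv.
- case: (eqVneq a (rev_ord i)) => [->|h]; last by rewrite mul0r eqxx.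
  rewrite mul1r => /Hv h.
  by move: ((Hrc _ _).1 h); rewrite rev_ordK.
- case: (eqVneq a (rev_ord i)) => [->|h]; last by rewrite mulr0 eqxx.
  case: (eqVneq b i) => [->|h']; last by rewrite mulr0 eqxx.
  by rewrite mulr1 => /Hv.
Qed.

Lemma part1 n (T : rel 'I_(n+n)) : subP T -> rev_closed T ->
  forall i j, T i j -> inB T (Sij i j).
Proof.
move=> Hsub Hrc i j hT.
have hij : i != j by apply: contraTneq (Hsub _ _ hT) => ->; rewrite ltnn.
rewrite Sij_Svi //; apply: part2 => // k; rewrite evecE.
by case: (eqVneq k i) => [->|]; rewrite ?eqxx.
Qed.

Lemma inB_mul n (T : rel 'I_(n+n)) A B : transitiveT T -> inB T A -> inB T B -> inB T (A *m B).
Proof.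
move=> Htr /inB_iff [sA pA] /inB_iff [sB pB]; apply/inB_iff; split.
  exact: supp_mul. exact: Sp_mul.
Qed.

Lemma inB_inv n (T : rel 'I_(n+n)) A : rev_closed T -> inB T A -> inB T (invmx A).
Proof.
move=> Hrc /inB_iff [sA pA]; apply/inB_iff; rewrite Sp_inv //; split.
  exact: supp_inv. exact: Sp_invSp.
Qed.

Lemma gen_inB n (T : rel 'I_(n+n)) M : subP T -> transitiveT T -> rev_closed T ->
  generated (gens T) M -> inB T M.
Proof.
move=> Hsub Htr Hrc; elim => {M}.
- apply/inB_iff; split; [exact: supp1 | exact: Sp1].
- by move=> M [i [j [_ _ hT ->]]]; apply: part1.
- by move=> M1 M2 _ h1 _ h2; apply: inB_mul.
- by move=> M _ h; apply: inB_inv.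
Qed.

Definition vcol n (B : 'M[F]_(n+n)) (j : 'I_n) : 'cV[F]_(n+n) :=
  \col_a (((j < a)%N && (a < n + n - j)%N)%:R * B a (lshift n j)).

Lemma colE' N p (A : 'M[F]_(p,N)) (j : 'I_N) a z : (A *m evec j) a z = A a j.
Proof.
rewrite mxE -[RHS](sum_delta j (fun k => A a k)).
by apply: eq_bigr => k _; rewrite evecE mulrC.
Qed.

Lemma Vn_col n (B : 'M[F]_(n+n)) j : Vn B *m evec j = vcol B j.
Proof.
apply/matrixP => a z; rewrite colE' /Vn summxE mxE.
have Ht : forall (k : 'I_n) (i : 'I_(n+n)),
   (evec i *m (evec i)^T *m B *m evec (lshift n k) *m (evec k)^T) a j
   = (k == j)%:R * ((i == a)%:R * B i (lshift n k)).
  move=> k i; rewrite outer_entry colE' evecE mxE.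
  under eq_bigr => c _ do rewrite outer_entry !evecE.
  have -> : \sum_c (a == i)%:R * (c == i)%:R * B c (lshift n k)
          = (a == i)%:R * \sum_c ((c == i)%:R * B c (lshift n k)).
    by rewrite mulr_sumr; apply: eq_bigr => c _; rewrite mulrA.
  rewrite sum_delta (eq_sym a) (eq_sym j); ring.
under eq_bigr => k _ do rewrite summxE.
under eq_bigr => k _ do under eq_bigr => i _ do rewrite Ht.
under eq_bigr => k _ do rewrite -mulr_sumr.
rewrite sum_delta big_mkcond /=.
rewrite -[RHS](sum_delta a (fun i => ((j < i)%N && (i < n + n - j)%N)%:R * B i (lshift n j))).
by apply: eq_bigr => i _; case: ifP; rewrite ?mulr0 ?mul1r // mul0r mulr0.
Qed.

Definition Tlt n : rel 'I_(n+n) := fun a b => (b < a)%N.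

Arguments Tlt : clear implicits.

Lemma Tlt_trans n : transitiveT (Tlt n).
Proof. move=> i j k; rewrite /Tlt => h1 h2; exact: ltn_trans h2 h1. Qed.

Lemma Tlt_sub n : subP (Tlt n).
Proof. by []. Qed.

Lemma Tlt_rev n : rev_closed (Tlt n).
Proof.
move=> i j; rewrite /Tlt /=; case: i j => [i hi] [j hj] /=.
split => h; apply/ltP; move/ltP: h; lia.
Qed.

Lemma lower_diag n (B : 'M[F]_(n+n)) (a b : 'I_(n+n)) : supp (Tlt n) B -> ~~ (b < a)%N ->
  B a b = (a == b)%:R.
Proof.
move=> HB hab; apply/eqP; rewrite -subr_eq0 -oneE -subE.
by apply: contraNT hab => /HB.
Qed.

Definition colfix n (B : 'M[F]_(n+n)) (c : 'I_(n+n)) := forall m, B m c = (m == c)%:R.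

Lemma row_fix n (B : 'M[F]_(n+n)) c : Sp B -> colfix B c ->
  forall b, B (rev_ord c) b = (b == rev_ord c)%:R.
Proof.
move=> HB Hc b.
have := congr1 (fun X : 'M[F]_(n+n) => X (rev_ord b) c) (Sp_linv HB); rewrite /= mxE oneE.
under eq_bigr => m _ do rewrite Hc mulrC.
rewrite sum_delta RAR mxE rev_ordK => ->.
by rewrite rev_eq eq_sym.
Qed.

Definition Lev n (j : nat) (B : 'M[F]_(n+n)) :=
  [/\ Sp B, supp (Tlt n) B & forall k : 'I_n, (k < j)%N -> colfix B (lshift n k)].

Arguments Lev : clear implicits.

Definition Ghat n (B : 'M[F]_(n+n)) (k : nat) : 'M[F]_(n+n) :=
  match (insub k : option 'I_n) with
  | Some kk => Svi (vcol B kk) (lshift n kk)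
  | None => 1%:M
  end.

Lemma base_case n (B : 'M[F]_(n+n)) : Lev n n B -> B = 1%:M.
Proof.
case=> HS Hl Hc; apply/matrixP => a b; rewrite oneE.
have [hb|hb] := ltnP b n.
  have -> : b = lshift n (Ordinal hb) by apply/val_inj.
  exact: Hc.
have [ha|ha] := ltnP a n.
  apply: lower_diag => //; rewrite -leqNgt; apply: ltnW; exact: leq_trans ha hb.
have hc : (rev_ord a < n)%N by case: a ha => a /= Ha ha; lia.
have Hf := Hc (Ordinal hc) hc.
have := row_fix HS Hf b.
have -> : rev_ord (lshift n (Ordinal hc)) = a by apply/val_inj => /=; case: a ha {hc Hf} => a /= Ha ha; lia.
by move=> ->; rewrite eq_sym.
Qed.

Lemma step n (j : nat) (B : 'M[F]_(n+n)) (hj : (j < n)%N) :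
  Lev n j B ->
  let S := Svi (vcol B (Ordinal hj)) (lshift n (Ordinal hj)) in
  [/\ Lev n j.+1 (S *m B), B = S *m (S *m B) &
      forall kk : 'I_n, (j < kk)%N -> vcol (S *m B) kk = vcol B kk].
Proof.
move=> [HS Hl Hc] S.
set jj := Ordinal hj; set i := lshift n jj; set v := vcol B jj.
have hvi : v i 0 = 0 by rewrite /v mxE /= ltnn mul0r.
have HSS : S *m S = 1%:M := Svi_invol hvi.
have Hsupp : forall a, v a 0 != 0 -> Tlt n a i.
  by move=> a; rewrite /v mxE /Tlt /=; case: (ltnP j a) => //= _; rewrite mul0r eqxx.
have HinS : inB (Tlt n) S := part2 (@Tlt_sub n) (@Tlt_rev n) Hsupp.
case/inB_iff: HinS => sS pS.
have Hcol : forall m, B m i = S m i.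
  move=> m; rewrite /S SviEE eqxx mulr1 andbT.
  rewrite [v (rev_ord i) 0 * _]mulrC -addrA F2_add_self addr0.
  rewrite /v mxE /=.
  case: (ltnP j m) => hjm /=.
  - have -> : (m == i) = false.
      by apply/negbTE; apply: contraTneq hjm => ->; rewrite /= ltnn.
    case: (ltnP m (n + n - j)) => hm /=; first by rewrite mul1r add0r.
    rewrite mul0r addr0.
    have hm' := ltn_ord m.
    have hc : (rev_ord m < j)%N by rewrite /=; lia.
    have hcn : (rev_ord m < n)%N by apply: ltn_trans hc hj.
    have Hf := Hc (Ordinal hcn) hc.
    have := row_fix HS Hf i.
    have -> : rev_ord (lshift n (Ordinal hcn)) = m by apply/val_inj => /=; lia.
    move=> ->.
    have -> : (i == m) = false by apply/negbTE; apply: contraTneq hjm => <-; rewrite /= ltnn.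
    by [].
  - rewrite mul0r addr0; apply: lower_diag => //.
    by rewrite /= -leqNgt.
split.
- split.
  + exact: Sp_mul pS HS.
  + exact: supp_mul (@Tlt_trans n) sS Hl.
  + move=> k hk m; rewrite mxE.
    case: (ltnP k j) => hkj.
    * under eq_bigr => x _ do rewrite (Hc k hkj) mulrC.
      rewrite sum_delta /S SviEE.
      have -> : (lshift n k == i) = false.
        by apply/negbTE/eqP => /(congr1 val) /= hk'; rewrite hk' ltnn in hkj.
      rewrite andbF !mulr0 addr0 /v mxE /=.
      have -> : (n + n - k.+1 < n + n - j)%N = false.
        by apply/negbTE; rewrite -leqNgt; case: k hk hkj => k /= Hk hk hkj; lia.
      by rewrite andbF mul0r mulr0 !addr0.
    * have hkj' : k = jj by apply/val_inj => /=; lia.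
      rewrite hkj' -/i.
      transitivity ((S *m S) m i); last by rewrite HSS oneE.
      by rewrite mxE; apply: eq_bigr => x _; rewrite Hcol.
- by rewrite mulmxA HSS mul1mx.
- move=> kk hkk; apply/matrixP => a z; rewrite !mxE.
  case: (boolP ((kk < a)%N && (a < n + n - kk)%N)) => hP; last by rewrite !mul0r.
  congr (_ * _).
  have har : (a == rev_ord i) = false.
    apply/negbTE; apply: contraTneq hP => -> /=; rewrite negb_and; apply/orP; right.
    by rewrite -leqNgt; case: kk hkk => kk /= Hkk hkk; lia.
  under eq_bigr => x _ do rewrite /S SviEE har mul0r andFb mulr0 !addr0 mulrDl.
  rewrite big_split /=.
  under eq_bigr => x _ do rewrite eq_sym.
  rewrite sum_delta.
  under eq_bigr => x _ do rewrite (mulrC (vcol _ _ _ _)) -mulrA.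
  rewrite sum_delta.
  rewrite (@lower_diag n B i (lshift n kk) Hl) /=; last by rewrite -leqNgt ltnW.
  have -> : (i == lshift n kk) = false.
    by apply/negbTE/eqP => /(congr1 val) /= hk'; rewrite hk' ltnn in hkk.
  by rewrite mulr0 addr0.
Qed.

Lemma main_ind n d : forall j (B : 'M[F]_(n+n)), (j + d = n)%N -> Lev n j B ->
  B = \big[mulmx/1%:M]_(j <= k < n) Ghat B k.
Proof.
elim: d => [|d IH] j B hjd HL.
  rewrite addn0 in hjd; subst j; rewrite big_geq //; exact: base_case.
have hj : (j < n)%N by lia.
have [HL' HB HV] := step hj HL.
rewrite big_ltn // {1}HB.
have -> : Ghat B j = Svi (vcol B (Ordinal hj)) (lshift n (Ordinal hj)).
  by rewrite /Ghat insubT.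
congr (_ *m _).
rewrite {1}(IH j.+1 _ _ HL'); last by lia.
apply: eq_big_nat => k /andP [hk _]; rewrite /Ghat.
case: insubP => [kk _ hkk|//]; rewrite HV //; by rewrite hkk.
Qed.

Lemma part4eq n (T : rel 'I_(n+n)) B : subP T -> inB T B ->
  B = \big[mulmx/1%:M]_(j < n) Svi (Vn B *m evec j) (lshift n j).
Proof.
move=> Hsub HB.
have HL : Lev n 0 B.
  by case/inB_iff: HB => sB pB; split => // a b /sB /Hsub.
rewrite {1}(@main_ind n n 0 B) // big_mkord.
apply: eq_bigr => k _; by rewrite /Ghat valK Vn_col.
Qed.

Lemma big_cat_mx N (s1 s2 : seq 'M[F]_N) :
  \big[mulmx/1%:M]_(g <- s1 ++ s2) g
  = \big[mulmx/1%:M]_(g <- s1) g *m \big[mulmx/1%:M]_(g <- s2) g.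
Proof.
elim: s1 => [|x s IH]; first by rewrite big_nil mul1mx.
by rewrite cat_cons !big_cons IH mulmxA.
Qed.

Lemma prod_of1 N (G : 'M[F]_N -> Prop) : prod_of G 1%:M.
Proof. by exists [::]; split => //; rewrite big_nil. Qed.

Lemma prod_of_g N (G : 'M[F]_N -> Prop) g : G g -> prod_of G g.
Proof.
move=> Hg; exists [:: g]; split; last by rewrite big_cons big_nil mulmx1.
by move=> h; rewrite inE => /eqP ->.
Qed.

Lemma prod_of_mul N (G : 'M[F]_N -> Prop) A B :
  prod_of G A -> prod_of G B -> prod_of G (A *m B).
Proof.
move=> [s1 [H1 ->]] [s2 [H2 ->]]; exists (s1 ++ s2); split; last by rewrite big_cat_mx.
by move=> g; rewrite mem_cat => /orP [/H1|/H2].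
Qed.

Lemma prod_of_gen N (G : 'M[F]_N -> Prop) M : prod_of G M -> generated G M.
Proof.
move=> [s [Hs ->]]; elim: s Hs => [|x s IH] Hs; first by rewrite big_nil; exact: gen_one.
rewrite big_cons; apply: gen_mul; first by apply: gen_base; apply: Hs; rewrite inE eqxx.
by apply: IH => g hg; apply: Hs; rewrite inE hg orbT.
Qed.

Lemma Svi_mul n (v u : 'cV[F]_(n+n)) i : v i 0 = 0 -> u i 0 = 0 ->
  Svi v i *m Svi u i = Svi (v + u + dot (Rmx n *m v) u *: evec (rev_ord i)) i.
Proof.
move=> hv hu; rewrite !SviE mulmxDl mul1mx mulmxDr mulmx1 EmEm //.
set w := dot _ _.
apply/matrixP => a b.
rewrite !(addE, scaleE, EmE, oneE, outer_entry, evecE) rev_eq2 eqxx !boolM.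
rewrite -[LHS]addr0 -(F2_add_self (w * ((a == rev_ord i)%:R * (b == i)%:R))).
rewrite mulr1n; ring.
Qed.

Definition trunc N (v : 'cV[F]_N) (m : nat) : 'cV[F]_N :=
  \col_a ((a < m)%N%:R * v a 0).

Lemma Svi0 n (i : 'I_(n+n)) : Svi 0 i = 1%:M.
Proof. by apply/matrixP => a b; rewrite SviEE !mxE !mul0r mulr0 !addr0. Qed.

Lemma prod_gens n (T : rel 'I_(n+n)) (j : 'I_n) (v : 'cV[F]_(n+n)) :
  transitiveT T -> rev_closed T ->
  (forall a : 'I_(n+n), v a 0 != 0 ->
     [&& (j < a)%N, (a < n + n - j)%N & T a (lshift n j)]) ->
  prod_of (gens T) (Svi v (lshift n j)).
Proof.
move=> Htr Hrc Hv.
set i := lshift n j.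
have hvi : v i 0 = 0.
  by apply/eqP; apply: contraTT isT => /Hv; rewrite /= ltnn.
suff H : forall m, prod_of (gens T) (Svi (trunc v m) i).
  have -> : v = trunc v (n + n).
    by apply/matrixP => a z; rewrite mxE ltn_ord mul1r [z]ord1.
  exact: H.
elim => [|m IH].
  have -> : trunc v 0 = 0 by apply/matrixP => a z; rewrite !mxE mul0r.
  rewrite Svi0; exact: prod_of1.
case: (ltnP m (n + n)) => hm; last first.
  have -> : trunc v m.+1 = trunc v m; last exact: IH.
  apply/matrixP => a z; rewrite !mxE.
  have ha := ltn_ord a.
  have -> : (a < m.+1)%N by lia.
  by have -> : (a < m)%N by lia.
set mm := Ordinal hm.
have Htrunc : trunc v m.+1 = trunc v m + v mm 0 *: evec mm.
  apply/matrixP => a z; rewrite [z]ord1 !mxE eqxx andbT.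
  case: (ltngtP a m) => h.
  - have -> : (a == mm) = false by apply/negbTE/eqP => /(congr1 val) /= hh; lia.
    have -> : (a < m.+1)%N by lia.
    by rewrite mulr0 addr0.
  - have -> : (a == mm) = false by apply/negbTE/eqP => /(congr1 val) /= hh; lia.
    have -> : (a < m.+1)%N = false by lia.
    by rewrite mulr0 addr0.
  - have -> : a = mm by apply/val_inj.
    have -> : (mm < m.+1)%N by rewrite /=.
    by rewrite eqxx mulr1 mul0r add0r mul1r.
case: (F2_cases (v mm 0)) => hv.
  by rewrite Htrunc hv scale0r addr0.
rewrite Htrunc hv scale1r.
have hmm : v mm 0 != 0 by rewrite hv oner_neq0.
have /and3P [hj1 hj2 hT] := Hv _ hmm.
set w := trunc v m.
have hwi : w i 0 = 0 by rewrite /w mxE hvi mulr0.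
have hmi : mm != i by apply: contraTneq hj1 => ->; rewrite /= ltnn.
have hei : evec mm i 0 = 0 by rewrite evecE eq_sym (negbTE hmi).
have gen_e : gens T (Svi (evec mm) i).
  exists mm, j; split => //; by rewrite Sij_Svi.
have Hmul := Svi_mul hwi hei.
case: (F2_cases (dot (Rmx n *m w) (evec mm))) => hw.
  move: Hmul; rewrite hw scale0r addr0 => <-.
  by apply: prod_of_mul => //; apply: prod_of_g.
move: Hmul; rewrite hw scale1r => Hmul.
have hri : rev_ord i != i by rewrite rev_neq.
have heri : evec (rev_ord i) i 0 = 0 by rewrite evecE rev_neq'.
have Hx : (w + evec mm + evec (rev_ord i)) i 0 = 0 by rewrite !addE hwi hei heri !addr0.
have Hmul2 := Svi_mul Hx heri.
rewrite dot_evecr mulRmx rev_ordK Hx scale0r addr0 -[w + evec mm + _ + _]addrA mx_add_self addr0 -Hmul in Hmul2.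
rewrite -Hmul2; apply: prod_of_mul; first by apply: prod_of_mul => //; apply: prod_of_g.
apply: prod_of_g; exists (rev_ord i), j; split.
- by rewrite /=; have := ltn_ord j; lia.
- by rewrite /=; have := ltn_ord j; lia.
- move: hw; rewrite dot_evecr mulRmx /w mxE.
  case: (rev_ord mm < m)%N; last by rewrite mul0r => /eqP; rewrite eq_sym oner_eq0.
  rewrite mul1r => hw'.
  have : v (rev_ord mm) 0 != 0 by rewrite hw' oner_neq0.
  move/Hv => /and3P [_ _ hT2].
  have hT3 := (Hrc _ _).1 hT.
  exact: Htr hT3 hT2.
- by rewrite Sij_Svi // eq_sym.
Qed.

Lemma vcol_supp n (T : rel 'I_(n+n)) (B : 'M[F]_(n+n)) (j : 'I_n) :
  supp T B -> forall a, vcol B j a 0 != 0 ->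
  [&& (j < a)%N, (a < n + n - j)%N & T a (lshift n j)].
Proof.
move=> sB a; rewrite mxE.
case: (boolP ((j < a)%N && (a < n + n - j)%N)) => hP; last by rewrite mul0r eqxx.
rewrite mul1r => H.
case/andP: hP => h1 h2; rewrite h1 h2 /=.
apply: sB; rewrite subE oneE.
have -> : (a == lshift n j) = false.
  by apply/negbTE/eqP => /(congr1 val) /= hh; rewrite hh ltnn in h1.
by rewrite subr0.
Qed.

Unset Implicit Arguments.

Theorem theorem2 (n : nat) (T : rel 'I_(n + n)) :
  subP T -> transitiveT T -> rev_closed T ->
  [/\ (forall i j : 'I_(n + n), T i j -> inB T (Sij i j)),
      (forall (i : 'I_(n + n)) (v : 'cV[F]_(n + n)),
          (forall j, v j 0 != 0 -> T j i) -> inB T (Svi v i)),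
      (forall M, inB T M <-> generated (gens T) M)
    & (forall B, inB T B ->
         B = \big[mulmx/1%:M]_(j < n) Svi (Vn B *m evec j) (lshift n j)
         /\ (forall j : 'I_n,
               inB T (Svi (Vn B *m evec j) (lshift n j))
               /\ prod_of (gens T) (Svi (Vn B *m evec j) (lshift n j))))].
Proof.
move=> Hsub Htr Hrc.
have P1 := part1 Hsub Hrc.
have P2 := part2 Hsub Hrc.
have P4 : forall B, inB T B ->
         B = \big[mulmx/1%:M]_(j < n) Svi (Vn B *m evec j) (lshift n j)
         /\ (forall j : 'I_n,
               inB T (Svi (Vn B *m evec j) (lshift n j))
               /\ prod_of (gens T) (Svi (Vn B *m evec j) (lshift n j))).
  move=> B HB; split; first exact: part4eq Hsub HB.
  have [sB _] := (inB_iff T B).1 HB.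
  move=> j; rewrite Vn_col; split.
  - apply: P2 => a /(vcol_supp sB) /and3P [_ _ ->] //.
  - apply: prod_gens => //; exact: vcol_supp sB.
split => //.
move=> M; split; last exact: gen_inB.
move=> HM; rewrite (P4 M HM).1.
apply: big_ind => //.
- exact: gen_one.
- by move=> x y; apply: gen_mul.
- by move=> j _; apply: prod_of_gen; exact: ((P4 M HM).2 j).2.
Qed.
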